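(* Let $\mathbb{Z}[i]$ be the ring of Gaussian integers. For all $r\ge1$ and all primes $p$, $H^2(\Gamma(SL_2(\mathbb{Z}[i]),p^r);\mathbb{F}_p)$ contains a subspace isomorphic to $\mathbb{F}_p\oplus\mathbb{F}_p$; that is, it has dimension at least $2$ over $\mathbb{F}_p$.
   Context: $\Gamma(SL_2(\mathbb{Z}[i]),p^r)=\ker\big(SL_2(\mathbb{Z}[i])\to SL_2(\mathbb{Z}[i]\otimes_{\mathbb{Z}}\mathbb{Z}/p^r)\big)$; cohomology is group cohomology with trivial coefficients $\mathbb{F}_p$. *)

(* Defs.v *)
From HB Require Import structures.
From mathcomp Require Import all_boot all_order all_algebra all_field.
Set Implicit Arguments. Unset Strict Implicit. Unset Printing Implicit Defensive.
Import Order.TTheory GRing.Theory Num.Theory.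
Local Open Scope ring_scope.

Definition gaussInt (z : algC) : bool :=
  ('Re z \is a Num.int) && ('Im z \is a Num.int).

Definition SL2Zi (A : 'M[algC]_2) : bool :=
  [forall i, forall j, gaussInt (A i j)] && (\det A == 1).

(* Principal congruence subgroup Gamma(SL_2(Z[i]), m) : kernel of reduction
   SL_2(Z[i]) -> SL_2(Z[i] / m Z[i]), i.e. A = 1 modulo m Z[i] entrywise. *)
Definition Gamma_cong (m : nat) (A : 'M[algC]_2) : bool :=
  SL2Zi A && [forall i, forall j, gaussInt ((A i j - (1%:M : 'M[algC]_2) i j) / m%:R)].

(* Inhomogeneous 2-cochains of a group G (given as a membership predicate on
   matrices, with matrix multiplication as group law) with values in the
   trivial module F. *)
Definition is_2cocycle (G : pred 'M[algC]_2) (F : zmodType)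
    (f : 'M[algC]_2 -> 'M[algC]_2 -> F) : Prop :=
  forall g h k, G g -> G h -> G k ->
    f h k - f (g *m h) k + f g (h *m k) - f g h = 0.

Definition is_2coboundary (G : pred 'M[algC]_2) (F : zmodType)
    (f : 'M[algC]_2 -> 'M[algC]_2 -> F) : Prop :=
  exists c : 'M[algC]_2 -> F, forall g h, G g -> G h ->
    f g h = c h - c (g *m h) + c g.

(* dim_F H^2(G; F) >= 2 : there are two 2-cocycles whose classes are linearly
   independent in H^2(G;F) = Z^2 / B^2. *)
Definition H2_dim_ge2 (G : pred 'M[algC]_2) (F : fieldType) : Prop :=
  exists f1 f2 : 'M[algC]_2 -> 'M[algC]_2 -> F,
    [/\ is_2cocycle G f1, is_2cocycle G f2 &
      forall a b : F,
        is_2coboundary G (fun g h => a * f1 g h + b * f2 g h) ->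
        a = 0 /\ b = 0].

(* Main.v *)
Require Import Defs.
From mathcomp Require Import all_boot all_order all_algebra all_field.
From mathcomp Require Import ring.
Set Implicit Arguments. Unset Strict Implicit. Unset Printing Implicit Defensive.
Import Order.TTheory GRing.Theory Num.Theory.
Local Open Scope ring_scope.

Lemma gaussD x y : gaussInt x -> gaussInt y -> gaussInt (x + y).
Proof.
rewrite /gaussInt => /andP[? ?] /andP[? ?].
by rewrite !raddfD /= ?rpredD.
Qed.

Lemma gaussM x y : gaussInt x -> gaussInt y -> gaussInt (x * y).
Proof.
rewrite /gaussInt => /andP[? ?] /andP[? ?].
by rewrite ReM ImM rpredB ?rpredD ?rpredM.
Qed.

Lemma Re_real (x : algC) : x \is Num.real -> 'Re x = x.
Proof. by move/Creal_ReP. Qed.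
Lemma Im_real (x : algC) : x \is Num.real -> 'Im x = 0.
Proof. by move/Creal_ImP. Qed.

Lemma gauss_nat n : gaussInt n%:R.
Proof. by rewrite /gaussInt Re_real ?Im_real ?realn ?rpred0 ?rpred_nat. Qed.

Lemma gauss_i : gaussInt 'i.
Proof. by rewrite /gaussInt Re_i Im_i rpred0 rpred1. Qed.

Lemma gauss0 : gaussInt 0.
Proof. exact: (gauss_nat 0). Qed.
Lemma gauss1 : gaussInt 1.
Proof. exact: (gauss_nat 1). Qed.

Definition q (p : nat) (x : algC) : 'F_p := (Num.floor x)%:~R.

Lemma qD p x y : x \is a Num.int -> y \is a Num.int -> q p (x + y) = q p x + q p y.
Proof.
move=> hx hy; rewrite /q real_floorDzr ?Rreal_int // ?intrD //.
Qed.

Lemma qM p x y : x \is a Num.int -> y \is a Num.int -> q p (x * y) = q p x * q p y.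
Proof.
move=> hx hy; rewrite /q -{1}(floorK hx) -{1}(floorK hy) -intrM intrKfloor.
by rewrite intrM.
Qed.

Lemma q_nat p n : q p n%:R = n%:R.
Proof. by rewrite /q (_ : (n%:R : algC) = (n%:Z)%:~R) ?intrKfloor /=. Qed.

Definition hm p m (F : algC -> algC) (i j : 'I_2) (A : 'M[algC]_2) : 'F_p :=
  q p (F (A i j / m%:R)).

Lemma ord2P (i : 'I_2) : i = 0 \/ i = 1.
Proof. by case: i => [[|[|i]] Hi] //; [left|right]; apply: val_inj. Qed.

Lemma prod_offdiag (g h : 'M[algC]_2) (i j : 'I_2) : i != j ->
  (g *m h) i j = g i i * h i j + g i j * h j j.
Proof.
rewrite !mxE !big_ord_recl big_ord0 addr0.
have E0 : lift ord0 ord0 = 1 :> 'I_2 by apply: val_inj.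
by case: (ord2P i) => ->; case: (ord2P j) => -> //= _; rewrite E0 // addrC.
Qed.

Lemma Gamma_entries m (g : 'M[algC]_2) (i j : 'I_2) : Gamma_cong m g ->
  gaussInt ((g i j - (1%:M : 'M[algC]_2) i j) / m%:R).
Proof. by case/andP=> _ /forallP/(_ i)/forallP/(_ j). Qed.

Lemma hom p r (F : {additive algC -> algC}) (i j : 'I_2) (g h : 'M[algC]_2) :
  prime p -> (1 <= r)%N ->
  (forall w, F ((p ^ r)%:R * w) = (p ^ r)%:R * F w) ->
  (forall w, gaussInt w -> F w \is a Num.int) -> i != j ->
  Gamma_cong (p ^ r) g -> Gamma_cong (p ^ r) h ->
  hm p (p ^ r) F i j (g *m h) = hm p (p ^ r) F i j g + hm p (p ^ r) F i j h.
Proof.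
move=> pp r1 FM Fint ij Gg Gh.
set mC : algC := (p ^ r)%:R.
have mC0 : mC != 0 by rewrite pnatr_eq0 -lt0n expn_gt0 prime_gt0.
have gx := Gamma_entries i i Gg; have hy := Gamma_entries j j Gh.
have g' := Gamma_entries i j Gg; have h' := Gamma_entries i j Gh.
rewrite -/mC !mxE eqxx /= in gx.
rewrite -/mC !mxE eqxx /= in hy.
rewrite -/mC !mxE (negbTE ij) subr0 in g'.
rewrite -/mC !mxE (negbTE ij) subr0 in h'.
rewrite /hm.
have -> : (g *m h) i j / mC = h i j / mC + g i j / mC +
   mC * ((g i i - 1) / mC * (h i j / mC) + (g i j / mC) * ((h j j - 1) / mC)).
  rewrite prod_offdiag //; field; exact: mC0.
rewrite -/mC !raddfD /= FM.
have I1 := Fint _ h'; have I2 := Fint _ g'.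
have I3 := Fint _ (gaussD (gaussM gx h') (gaussM g' hy)).
apply: etrans; first (apply: qD; [by apply: rpredD | apply: rpredM; [exact: rpred_nat | exact: I3]]).
apply: etrans; first (apply: congr2; [apply: qD => // | apply: qM => //; exact: rpred_nat]).
rewrite q_nat natrX pchar_Fp_0 // expr0n /= gtn_eqF // mul0r addr0 addrC.
done.
Qed.

Lemma cup_cocycle p (G : pred 'M[algC]_2) (al be : 'M[algC]_2 -> 'F_p) :
  (forall g h, G g -> G h -> al (g *m h) = al g + al h) ->
  (forall g h, G g -> G h -> be (g *m h) = be g + be h) ->
  is_2cocycle G (fun g h => al g * be h).
Proof.
move=> Ha Hb g h k Gg Gh Gk; rewrite Ha // Hb //; ring.
Qed.

Lemma cob_sym (G : pred 'M[algC]_2) (F : zmodType) f u v :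
  @is_2coboundary G F f -> G u -> G v -> u *m v = v *m u -> f u v = f v u.
Proof.
case=> c Hc Gu Gv uv; rewrite Hc // Hc // uv.
by rewrite addrC -!addrA; congr (_ + _); rewrite addrC.
Qed.

Definition Em (z : algC) : 'M[algC]_2 :=
  \matrix_(i, j) ((i == j)%:R + ((i == 1) && (j == 0))%:R * z).
Definition Um (z : algC) : 'M[algC]_2 := (Em z)^T.

Lemma Em_mul z w : Em z *m Em w = Em w *m Em z.
Proof.
apply/matrixP => i j; rewrite !mxE !big_ord_recl !big_ord0 !mxE.
have E0 : lift ord0 ord0 = 1 :> 'I_2 by apply: val_inj.
rewrite E0; case: (ord2P i) => ->; case: (ord2P j) => -> /=; ring.
Qed.

Lemma Gamma_tr m (A : 'M[algC]_2) : Gamma_cong m A -> Gamma_cong m A^T.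
Proof.
case/andP=> /andP[/forallP H1 H2] /forallP H3.
apply/andP; split; [apply/andP; split|].
- apply/forallP=> i; apply/forallP=> j; rewrite mxE.
  exact: (forallP (H1 j) i).
- by rewrite det_tr.
- apply/forallP=> i; apply/forallP=> j; rewrite !mxE eq_sym.
  have := forallP (H3 j) i; by rewrite !mxE.
Qed.

Lemma Em_Gamma p r z : prime p -> gaussInt z ->
  Gamma_cong (p ^ r) (Em ((p ^ r)%:R * z)).
Proof.
move=> pp hz.
set mC : algC := (p ^ r)%:R.
have mC0 : mC != 0 by rewrite pnatr_eq0 -lt0n expn_gt0 prime_gt0.
apply/andP; split; [apply/andP; split|].
- apply/forallP=> i; apply/forallP=> j; rewrite mxE.
  exact: gaussD (gauss_nat _) (gaussM (gauss_nat _) (gaussM (gauss_nat _) hz)).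
- rewrite det_trig; last first.
    apply/is_trig_mxP => i j; rewrite mxE.
    by case: (ord2P i) => ->; case: (ord2P j) => -> //=; rewrite mul0r addr0.
  rewrite !big_ord_recl big_ord0 !mxE.
  have E0 : lift ord0 ord0 = 1 :> 'I_2 by apply: val_inj.
  by rewrite E0 /= !mul0r !addr0 !mulr1.
- apply/forallP=> i; apply/forallP=> j; rewrite !mxE.
  rewrite [X in X - _]addrC addrK mulrCA mulrC mulKf //.
  exact: gaussM (gauss_nat _) hz.
Qed.

Lemma q0 p : q p 0 = 0.
Proof. exact: (q_nat p 0). Qed.
Lemma q1 p : q p 1 = 1.
Proof. exact: (q_nat p 1). Qed.

Lemma hm_Em10 p r (F : {additive algC -> algC}) z : prime p ->
  hm p (p ^ r) F 1 0 (Em ((p ^ r)%:R * z)) = q p (F z).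
Proof.
move=> pp; have mC0 : (p ^ r)%:R != 0 :> algC by rewrite pnatr_eq0 -lt0n expn_gt0 prime_gt0.
by rewrite /hm mxE /= add0r mul1r mulrC mulKf.
Qed.

Lemma hm_Em01 p r (F : {additive algC -> algC}) z :
  hm p (p ^ r) F 0 1 (Em ((p ^ r)%:R * z)) = 0.
Proof. by rewrite /hm mxE /= mul0r add0r mul0r raddf0 q0. Qed.

Lemma hm_Um01 p r (F : {additive algC -> algC}) z : prime p ->
  hm p (p ^ r) F 0 1 (Um ((p ^ r)%:R * z)) = q p (F z).
Proof.
move=> pp; have mC0 : (p ^ r)%:R != 0 :> algC by rewrite pnatr_eq0 -lt0n expn_gt0 prime_gt0.
by rewrite /hm /Um !mxE /= add0r mul1r mulrC mulKf.
Qed.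

Lemma hm_Um10 p r (F : {additive algC -> algC}) z :
  hm p (p ^ r) F 1 0 (Um ((p ^ r)%:R * z)) = 0.
Proof. by rewrite /hm /Um !mxE /= mul0r add0r mul0r raddf0 q0. Qed.

Lemma qRe1 p : q p ('Re 1) = 1.
Proof. by rewrite Re_real ?real1 // q1. Qed.
Lemma qIm1 p : q p ('Im 1) = 0.
Proof. by rewrite Im_real ?real1 // q0. Qed.
Lemma qRei p : q p ('Re 'i) = 0.
Proof. by rewrite Re_i q0. Qed.
Lemma qImi p : q p ('Im 'i) = 1.
Proof. by rewrite Im_i q1. Qed.

Theorem theorem6p1 (p r : nat) : prime p -> (1 <= r)%N ->
  H2_dim_ge2 (Gamma_cong (p ^ r)) 'F_p.
Proof.
move=> pp r1.
have FMre : forall w : algC, 'Re ((p ^ r)%:R * w) = (p ^ r)%:R * 'Re w.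
  by move=> w; rewrite ReM (Re_real (realn _ (p ^ r))) (Im_real (realn _ (p ^ r))) mul0r subr0.
have FMim : forall w : algC, 'Im ((p ^ r)%:R * w) = (p ^ r)%:R * 'Im w.
  by move=> w; rewrite ImM (Re_real (realn _ (p ^ r))) (Im_real (realn _ (p ^ r))) mulr0 addr0.
have Ire : forall w, gaussInt w -> 'Re w \is a Num.int by move=> w /andP[].
have Iim : forall w, gaussInt w -> 'Im w \is a Num.int by move=> w /andP[].
have hRe := fun i j g h ij Gg Gh => @hom p r (@Re algC) i j g h pp r1 FMre Ire ij Gg Gh.
have hIm := fun i j g h ij Gg Gh => @hom p r (@Im algC) i j g h pp r1 FMim Iim ij Gg Gh.
exists (fun g h => hm p (p ^ r) (@Re algC) 0 1 g * hm p (p ^ r) (@Im algC) 0 1 h).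
exists (fun g h => hm p (p ^ r) (@Re algC) 1 0 g * hm p (p ^ r) (@Im algC) 1 0 h).
split.
- by apply: cup_cocycle => g h Gg Gh; [apply: hRe | apply: hIm].
- by apply: cup_cocycle => g h Gg Gh; [apply: hRe | apply: hIm].
move=> a b Hc.
have Gu := Gamma_tr (Em_Gamma r pp gauss1).
have Gv := Gamma_tr (Em_Gamma r pp gauss_i).
have Gu' := Em_Gamma r pp gauss1.
have Gv' := Em_Gamma r pp gauss_i.
have K1 := cob_sym Hc Gu Gv (etrans (esym (trmx_mul _ _)) (etrans (congr1 trmx (Em_mul _ _)) (trmx_mul _ _))).
have K2 := cob_sym Hc Gu' Gv' (Em_mul _ _).
rewrite /= -!/(Um _) !hm_Um01 // !hm_Um10 // qRe1 qIm1 qRei qImi in K1.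
rewrite /= !hm_Em01 // !hm_Em10 // qRe1 qIm1 qRei qImi in K2.
move: K1 K2; rewrite !(mul0r, mulr0, mulr1, addr0, add0r) => -> ->.
by split.
Qed.
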